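(* Let $\mathcal C$ be a category with cofibrations (in the sense of Waldhausen) which is enriched over the category of abelian groups (hence additive), and let $w$ be an admissible class of morphisms in $\mathcal C$. Then $w$ satisfies Waldhausen's gluing axiom: given a commutative diagram $$y \leftarrow x \rightarrowtail z,\qquad y' \leftarrow x' \rightarrowtail z'$$ with $x\rightarrowtail z$ and $x'\rightarrowtail z'$ cofibrations and vertical morphisms $b\colon y\to y'$, $a\colon x\to x'$, $c\colon z\to z'$ all in $w$ and compatible with the horizontal maps, the induced morphism $b\sqcup_a c\colon y\sqcup_x z\to y'\sqcup_{x'} z'$ is in $w$. In particular $(\mathcal C,w)$ is a category with cofibrations and weak equivalences (Waldhausen category).
   Context: A cofibration sequence in $\mathcal C$ is a sequence $x\rightarrowtail y\twoheadrightarrow y/x$ where $x\rightarrowtail y$ is a cofibration and $y/x$ its cokernel (pushout along $x\to 0$). A class $w$ of morphisms in $\mathcal C$ is called admissible if: (i) $w$ contains all isomorphisms; (ii) $w$ satisfies two-out-of-three: for composable $x\xrightarrow{f}y\xrightarrow{g}z$, if two of $f,g,gf$ lie in $w$ so does the third; (iii) for any commutative diagram of cofibration sequences $x\rightarrowtail y\twoheadrightarrow y/x$ over $x'\rightarrowtail y'\twoheadrightarrow y'/x'$ with vertical maps $a\colon x\to x'$, $b\colon y\to y'$, $c\colon y/x\to y'/x'$, if two of $a,b,c$ are in $w$ then so is the third. *)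

(* Defs.v *)
From HB Require Import structures.
From mathcomp Require Import all_boot all_algebra.
Set Implicit Arguments. Unset Strict Implicit. Unset Printing Implicit Defensive.
Import GRing.Theory.
Local Open Scope ring_scope.

Record AbCat := {
  Obj :> Type;
  Hom : Obj -> Obj -> zmodType;
  idm : forall x, Hom x x;
  comp : forall x y z, Hom y z -> Hom x y -> Hom x z;
  compA : forall x y z t (f : Hom z t) (g : Hom y z) (h : Hom x y),
      comp f (comp g h) = comp (comp f g) h;
  comp1m : forall x y (f : Hom x y), comp (idm y) f = f;
  compm1 : forall x y (f : Hom x y), comp f (idm x) = f;
  compDl : forall x y z (f g : Hom y z) (h : Hom x y),
      comp (f + g) h = comp f h + comp g h;
  compDr : forall x y z (f : Hom y z) (g h : Hom x y),
      comp f (g + h) = comp f g + comp f h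
}.
Arguments idm {_} _.
Arguments comp {_ _ _ _}.
Notation "f \o\ g" := (comp f g) (at level 40, left associativity).

Section Defs.
Variable C : AbCat.

Definition is_iso (x y : C) (f : Hom x y) : Prop :=
  exists g : Hom y x, g \o\ f = idm x /\ f \o\ g = idm y.

(* o is a zero object: initial and terminal (existence of maps is given
   by the zero morphisms of the Ab-enrichment, so only uniqueness is needed) *)
Definition is_zero_object (o : C) : Prop :=
  (forall x (f g : Hom o x), f = g) /\ (forall x (f g : Hom x o), f = g).

Definition is_pushout (x y z p : C) (f : Hom x y) (g : Hom x z)
    (i : Hom y p) (j : Hom z p) : Prop :=
  i \o\ f = j \o\ g /\
  forall t (u : Hom y t) (v : Hom z t), u \o\ f = v \o\ g ->
    exists! h : Hom p t, h \o\ i = u /\ h \o\ j = v.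

Definition cof_class := forall x y : C, Hom x y -> Prop.

Definition is_cofibration_structure (o : C) (cof : cof_class) : Prop :=
  [/\
      (forall x y (f : Hom x y), is_iso f -> cof x y f),
      (forall x y z (f : Hom y z) (g : Hom x y),
          cof _ _ f -> cof _ _ g -> cof _ _ (f \o\ g)),
      (forall x (f : Hom o x), cof _ _ f) &
      (forall x y z (f : Hom x y) (g : Hom x z), cof _ _ g ->
          exists p (i : Hom y p) (j : Hom z p),
            is_pushout f g i j /\ cof _ _ i)].

Definition is_cofib_seq (o : C) (cof : cof_class) (x y q : C)
    (i : Hom x y) (p : Hom y q) : Prop :=
  cof _ _ i /\ exists (t : Hom x o) (s : Hom o q), is_pushout i t p s.

Definition admissible (o : C) (cof : cof_class) (w : cof_class) : Prop :=
  [/\ (forall x y (f : Hom x y), is_iso f -> w x y f),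
      (forall x y z (f : Hom x y) (g : Hom y z),
          [/\ (w _ _ f -> w _ _ g -> w _ _ (g \o\ f)),
              (w _ _ f -> w _ _ (g \o\ f) -> w _ _ g) &
              (w _ _ g -> w _ _ (g \o\ f) -> w _ _ f)]) &
      (forall x y q x' y' q' (i : Hom x y) (p : Hom y q)
              (i' : Hom x' y') (p' : Hom y' q')
              (a : Hom x x') (b : Hom y y') (c : Hom q q'),
          is_cofib_seq o cof i p -> is_cofib_seq o cof i' p' ->
          b \o\ i = i' \o\ a -> c \o\ p = p' \o\ b ->
          [/\ (w _ _ a -> w _ _ b -> w _ _ c),
              (w _ _ a -> w _ _ c -> w _ _ b) &
              (w _ _ b -> w _ _ c -> w _ _ a)])].

Definition gluing_axiom (cof : cof_class) (w : cof_class) : Prop :=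
  forall x y z x' y' z' p p' (f : Hom x y) (g : Hom x z)
         (f' : Hom x' y') (g' : Hom x' z')
         (a : Hom x x') (b : Hom y y') (c : Hom z z')
         (i : Hom y p) (j : Hom z p) (i' : Hom y' p') (j' : Hom z' p')
         (h : Hom p p'),
    cof _ _ g -> cof _ _ g' ->
    b \o\ f = f' \o\ a -> c \o\ g = g' \o\ a ->
    w _ _ a -> w _ _ b -> w _ _ c ->
    is_pushout f g i j -> is_pushout f' g' i' j' ->
    h \o\ i = i' \o\ b -> h \o\ j = j' \o\ c ->
    w _ _ h.

Definition is_waldhausen_category (o : C) (cof : cof_class) (w : cof_class)
  : Prop :=
  [/\ is_zero_object o, is_cofibration_structure o cof,
      (forall x y (f : Hom x y), is_iso f -> w x y f),
      (forall x y z (f : Hom x y) (g : Hom y z),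
          w _ _ f -> w _ _ g -> w _ _ (g \o\ f)) &
      gluing_axiom cof w].

End Defs.

(* Main.v *)
Require Import Defs.
From mathcomp Require Import all_boot all_algebra.
Set Implicit Arguments. Unset Strict Implicit.
Local Notation Hom := Defs.Hom.
Local Notation compA := Defs.compA.
Local Open Scope ring_scope.

Section Helpers.
Variable C : AbCat.

Lemma po_uniq (x y z p t : C) (f : Hom x y) (g : Hom x z) (i : Hom y p)
  (j : Hom z p) (h1 h2 : Hom p t) :
  is_pushout f g i j -> h1 \o\ i = h2 \o\ i -> h1 \o\ j = h2 \o\ j -> h1 = h2.
Proof.
move=> [e U] e1 e2.
have e' : (h2 \o\ i) \o\ f = (h2 \o\ j) \o\ g by rewrite -!compA e.
have [k [_ uk]] := U t (h2 \o\ i) (h2 \o\ j) e'.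
by rewrite -(uk h1 (conj e1 e2)) (uk h2 (conj erefl erefl)).
Qed.

Lemma po_sym (x y z p : C) (f : Hom x y) (g : Hom x z) (i : Hom y p)
  (j : Hom z p) : is_pushout f g i j -> is_pushout g f j i.
Proof.
move=> [e U]; split; first by rewrite e.
move=> t u v euv.
have [h [[h1 h2] uh]] := U t v u (esym euv).
exists h; split; first by [].
by move=> h' [a b]; apply: uh; split.
Qed.

Lemma po_iso (x y z p0 p : C) (f : Hom x y) (g : Hom x z) (i0 : Hom y p0)
  (j0 : Hom z p0) (i : Hom y p) (j : Hom z p) :
  is_pushout f g i0 j0 -> is_pushout f g i j ->
  exists phi : Hom p0 p, is_iso phi /\ phi \o\ i0 = i.
Proof.
move=> P0 P.
have [phi [[p1 p2] _]] := P0.2 p i j P.1.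
have [psi [[q1 q2] _]] := P.2 p0 i0 j0 P0.1.
exists phi; split => //; exists psi; split.
- apply: (po_uniq P0); by rewrite -compA ?p1 ?p2 ?q1 ?q2 comp1m.
- apply: (po_uniq P); by rewrite -compA ?p1 ?p2 ?q1 ?q2 comp1m.
Qed.

Lemma coker_paste (o x y z p q : C) (Z : is_zero_object o) (f : Hom x y)
  (g : Hom x z) (i : Hom y p) (j : Hom z p) (tx : Hom x o) (ty : Hom y o)
  (s : Hom o q) (pi : Hom z q) :
  is_pushout f g i j -> is_pushout g tx pi s ->
  exists rho : Hom p q, rho \o\ j = pi /\ is_pushout i ty rho s.
Proof.
move=> P Q.
have e0 : (s \o\ ty) \o\ f = pi \o\ g.
  by rewrite -compA (Z.2 _ (ty \o\ f) tx) Q.1.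
have [rho [[ri rj] _]] := P.2 q (s \o\ ty) pi e0.
exists rho; split => //; split; first by [].
move=> t u v euv.
have e1 : (u \o\ j) \o\ g = v \o\ tx.
  by rewrite -compA -P.1 compA euv -compA (Z.2 _ (ty \o\ f) tx).
have [k [[k1 k2] uk]] := Q.2 t (u \o\ j) v e1.
exists k; split.
- split => //; apply: (po_uniq P).
  + by rewrite -compA ri compA k2.
  + by rewrite -compA rj k1.
- move=> k' [a b]; apply: uk; split => //.
  by rewrite -rj compA a.
Qed.

End Helpers.

Theorem lemma1p2 (C : AbCat) (o : C) (cof w : cof_class C) :
  is_zero_object o -> is_cofibration_structure o cof ->
  admissible o cof w ->
  gluing_axiom cof w /\ is_waldhausen_category o cof w.
Proof.
move=> Z [Ciso Ccomp C0 Cpo] [Wiso W23 W3].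
have glue : gluing_axiom cof w.
  move=> x y z x' y' z' p p' f g f' g' a b c i j i' j' h cg cg' eb ec
    wa wb wc P P' hi hj.
  have [q [s [pi [Q _]]]] := Cpo _ _ _ (0 : Hom x o) g cg.
  have [q' [s' [pi' [Q' _]]]] := Cpo _ _ _ (0 : Hom x' o) g' cg'.
  have {}Q := po_sym Q; have {}Q' := po_sym Q'.
  have [rho [rj R]] := coker_paste Z (0 : Hom y o) P Q.
  have [rho' [rj' R']] := coker_paste Z (0 : Hom y' o) P' Q'.
  have cofi : forall (x y z p : C) (f : Hom x y) (g : Hom x z) (i : Hom y p)
      (j : Hom z p), cof _ _ g -> is_pushout f g i j -> cof _ _ i.
    move=> x0 y0 z0 p0 f0 g0 i0 j0 cg0 P0.
    have [p1 [i1 [j1 [P1 ci1]]]] := Cpo _ _ _ f0 g0 cg0.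
    have [phi [iphi <-]] := po_iso P1 P0.
    by apply: Ccomp => //; apply: Ciso.
  have e1 : (pi' \o\ c) \o\ g = s' \o\ (0 : Hom x o).
    by rewrite -compA ec compA Q'.1 -compA (Z.2 _ (0 \o\ a) 0).
  have [cb [[cb1 cb2] _]] := Q.2 q' (pi' \o\ c) s' e1.
  have wcb : w _ _ cb.
    have S1 : is_cofib_seq o cof g pi by split => //; exists 0, s.
    have S2 : is_cofib_seq o cof g' pi' by split => //; exists 0, s'.
    by case: (W3 _ _ _ _ _ _ _ _ _ _ a c cb S1 S2 ec cb1) => H _ _; apply: H.
  have S1 : is_cofib_seq o cof i rho.
    by split; [apply: cofi cg P | exists 0, s].
  have S2 : is_cofib_seq o cof i' rho'.
    by split; [apply: cofi cg' P' | exists 0, s'].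
  have e2 : cb \o\ rho = rho' \o\ h.
    apply: (po_uniq P).
    - rewrite -!compA R.1 hi compA cb2 compA R'.1 -compA.
      by rewrite (Z.2 _ (0 \o\ b) 0).
    - by rewrite -!compA rj hj compA rj' cb1.
  by case: (W3 _ _ _ _ _ _ _ _ _ _ b h cb S1 S2 hi e2) => _ H _; apply: H.
split; first exact: glue.
rewrite /is_waldhausen_category; split => //.
- by move=> x y z f g; case: (W23 _ _ _ f g) => H _ _.
Qed.
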